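(* Let $v_1,\dots,v_n\in\mathbb{R}^d$, let $Z\in\mathbb{R}^{d\times d}$ be symmetric with $Z\succeq\frac14I$, let $\alpha=8\sqrt d$, and let $A=(\alpha Z-\ell I)^{-2}$ where $\ell\in\mathbb{R}$ is the unique scalar such that $\alpha Z-\ell I\succ0$ and $\operatorname{tr}(A)=1$. Then for every $1\le i\le n$, \[ \langle v_iv_i^\top,Z^{-1}\rangle\le\alpha\langle v_iv_i^\top,A^{1/2}\rangle\le\alpha\lambda_{\min}(Z)\langle v_iv_i^\top,Z^{-1}\rangle. \]
   Context: $\langle M,N\rangle=\operatorname{tr}(MN)$ for symmetric matrices. *)

(* Defs.v *)
From HB Require Import structures.
From mathcomp Require Import all_boot all_order all_algebra.
Set Implicit Arguments. Unset Strict Implicit. Unset Printing Implicit Defensive.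
Import Order.TTheory GRing.Theory Num.Theory.
Local Open Scope ring_scope.

Definition symmx (R : rcfType) (d : nat) (M : 'M[R]_d) : Prop := M^T = M.

Definition psdmx (R : rcfType) (d : nat) (M : 'M[R]_d) : Prop :=
  symmx M /\ forall x : 'cV[R]_d, 0 <= (x^T *m M *m x) 0 0.

Definition pdmx (R : rcfType) (d : nat) (M : 'M[R]_d) : Prop :=
  symmx M /\ forall x : 'cV[R]_d, x != 0 -> 0 < (x^T *m M *m x) 0 0.

Definition mxinner (R : rcfType) (d : nat) (M N : 'M[R]_d) : R := \tr (M *m N).

Definition is_psd_sqrt (R : rcfType) (d : nat) (A S : 'M[R]_d) : Prop :=
  psdmx S /\ S *m S = A.

Definition is_lambda_min (R : rcfType) (d : nat) (M : 'M[R]_d) (lam : R) : Prop :=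
  eigenvalue M lam /\ forall b, eigenvalue M b -> lam <= b.

(* Main.v *)
Require Import Defs.
From HB Require Import structures.
From mathcomp Require Import all_boot all_order all_algebra.
From mathcomp Require Import complex.
From mathcomp Require Import ring lra.
Import Order.TTheory GRing.Theory Num.Theory.
Local Open Scope ring_scope.

Section Cplx.
Import Num.Def.
Local Open Scope complex_scope.
Local Open Scope ring_scope.

Lemma real_conj (R : rcfType) (r : R) : (r%:C)^* = r%:C :> R[i].
Proof. by apply: conj_Creal; apply/complex_realP; exists r. Qed.

Lemma psd_from_lmin (R : rcfType) d (Z : 'M[R]_d) lam :
  Z^T = Z -> (forall r, eigenvalue Z r -> lam <= r) ->
  forall x : 'cV[R]_d, lam * (x^T *m x) 0 0 <= (x^T *m Z *m x) 0 0.
Proof.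
move=> Zs Zev x.
pose Zc := map_mx (real_complex R) Z.
have Zh : Zc \is hermsymmx.
  apply/is_hermitianmxP; rewrite expr0 scale1r.
  apply/matrixP => i j; rewrite !mxE real_conj -[in LHS]Zs mxE //.
have /orthomx_spectralP Zd := hermitian_normalmx Zh.
have Xr := hermitian_spectral_diag_real Zh.
set P := spectralmx Zc in Zd.
set X := spectral_diag Zc in Zd Xr.
have Pu : P \is unitarymx by exact: spectral_unitarymx.
have Pun : P \in unitmx by exact: spectral_unit.
have ev : forall k, exists2 r, X 0 k = r%:C & lam <= r.
  move=> k; have /complex_realP [r Hr] : X 0 k \is Num.real by apply: (mxOverP Xr).
  exists r => //; apply: Zev.
  rewrite eigenvalue_root_char -(fmorph_root (real_complex R)) map_char_poly -eigenvalue_root_char -/Zc.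
  rewrite (_ : _ r = X 0 k); last by rewrite Hr.
  apply/eigenvalueP; exists (row k P).
    rewrite Zd !mulmxA -row_mul mulmxV //.
    by rewrite -row_mul mul1mx row_diag_mx -scalemxAl -rowE.
  apply/negP => /eqP H0.
  have : row k P *m invmx P = 0 by rewrite H0 mul0mx.
  rewrite rowE.
  rewrite mulmxK // => /matrixP /(_ 0 k); rewrite !mxE !eqxx /= => /eqP; rewrite oner_eq0.
  done.
pose xc := map_mx (real_complex R) x.
have E1 : forall M : 'M[R]_d, ((x^T *m M *m x) 0 0)%:C = ((xc^T *m map_mx (real_complex R) M *m xc) 0 0).
  by move=> M; rewrite /xc map_trmx -!(map_mxM (real_complex R)) [RHS]mxE.
have xcT : xc^T = map_mx conjC xc^T.
  by apply/matrixP => i j; rewrite !mxE real_conj.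
have PtP : map_mx conjC P^T *m P = 1%:M by rewrite -invmx_unitary // mulVmx.
pose y := P *m xc.
have yt : map_mx conjC y^T = map_mx conjC xc^T *m map_mx conjC P^T.
  by rewrite /y trmx_mul map_mxM.
suff: ((lam * (x^T *m x) 0 0)%:C <= ((x^T *m Z *m x) 0 0)%:C :> R[i]).
  by rewrite lecR.
rewrite rmorphM /= -{1}(mulmx1 x^T) !E1 -/Zc Zd map_mx1 -PtP.
rewrite invmx_unitary // xcT !mulmxA -yt -!(mulmxA _ P xc) -/y.
rewrite mul_mx_diag !mxE mulr_sumr; apply: ler_sum => k _; rewrite !mxE.
have [r -> lr] := ev k.
rewrite mulrAC [_%:C * (_ * _)]mulrC -subr_ge0 -mulrBr; apply: mulr_ge0.
  by rewrite mulrC mul_conjC_ge0.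
by rewrite -rmorphB /= ler0c subr_ge0.
Qed.

End Cplx.

Set Implicit Arguments.
Section QF.
Context {R : rcfType} {d : nat}.
Implicit Types (M P Q : 'M[R]_d) (x y z : 'cV[R]_d).

Definition qf M x := (x^T *m M *m x) 0 0.
Definition nrm x := (x^T *m x) 0 0.

Lemma entry_tr (A : 'M[R]_(1, 1)) : A 0 0 = (A^T) 0 0.
Proof. by rewrite mxE. Qed.

Lemma entryB (A B : 'M[R]_(1, 1)) : (A - B) 0 0 = A 0 0 - B 0 0.
Proof. by rewrite mxE mxE. Qed.

Lemma entryD (A B : 'M[R]_(1, 1)) : (A + B) 0 0 = A 0 0 + B 0 0.
Proof. by rewrite mxE. Qed.

Lemma entryZ a (A : 'M[R]_(1, 1)) : (a *: A) 0 0 = a * A 0 0.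
Proof. by rewrite mxE. Qed.

Lemma dot_sym x y : (x^T *m y) 0 0 = (y^T *m x) 0 0.
Proof. by rewrite entry_tr trmx_mul trmxK. Qed.

Lemma bf_sym M x y : M^T = M -> (x^T *m M *m y) 0 0 = (y^T *m M *m x) 0 0.
Proof. by move=> Ms; rewrite entry_tr !trmx_mul trmxK Ms mulmxA. Qed.

Lemma nrmE x : nrm x = \sum_i x i 0 ^+ 2.
Proof. by rewrite /nrm mxE; apply: eq_bigr => i _; rewrite mxE expr2. Qed.

Lemma nrm_ge0 x : 0 <= nrm x.
Proof. by rewrite nrmE; apply: sumr_ge0 => i _; apply: sqr_ge0. Qed.

Lemma nrm_eq0 x : nrm x = 0 -> x = 0.
Proof.
rewrite nrmE => H; apply/matrixP => i j; rewrite ord1 mxE.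
have := @psumr_eq0P _ _ xpredT (fun i => x i 0 ^+ 2) (fun i _ => sqr_ge0 (x i 0)) H i isT.
by move=> /eqP; rewrite sqrf_eq0 => /eqP.
Qed.

Lemma coord_le x k : x k 0 ^+ 2 <= nrm x.
Proof.
rewrite nrmE (bigD1 k) //= lerDl; apply: sumr_ge0 => i _; apply: sqr_ge0.
Qed.

Lemma qf_lin a b M x : qf (a *: M - b%:M) x = a * qf M x - b * nrm x.
Proof.
rewrite /qf /nrm mulmxBr mulmxBl -scalemxAr -scalemxAl mul_mx_scalar -scalemxAl.
by rewrite !mxE.
Qed.


Lemma unit_pd M : M^T = M -> (forall x, x != 0 -> 0 < qf M x) -> M \in unitmx.
Proof.
move=> Ms Mp; rewrite unitmxE unitfE; apply/negP => /det0P [v vn0 vM].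
have : 0 < qf M v^T.
  by apply: Mp; apply: contra vn0 => /eqP /(congr1 trmx); rewrite trmxK trmx0 => ->.
rewrite /qf -mulmxA -{1}Ms -trmx_mul vM trmx0 mulmx0 mxE ltxx //.
Qed.

Lemma inv_anti P Q x : P^T = P -> Q^T = Q -> P \in unitmx -> Q \in unitmx ->
  (forall y, 0 <= qf Q y) -> (forall y, qf Q y <= qf P y) ->
  qf (invmx P) x <= qf (invmx Q) x.
Proof.
move=> Ps Qs Pu Qu Qp QP.
set y := invmx P *m x; set z := invmx Q *m x.
have Py : P *m y = x by rewrite /y mulKVmx.
have Qz : Q *m z = x by rewrite /z mulKVmx.
have e1 : qf (invmx P) x = (y^T *m x) 0 0 by rewrite /qf -mulmxA dot_sym.
have e2 : qf (invmx Q) x = (z^T *m x) 0 0 by rewrite /qf -mulmxA dot_sym.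
have e3 : qf P y = (y^T *m x) 0 0 by rewrite /qf -mulmxA Py.
have e4 : qf Q z = (z^T *m x) 0 0 by rewrite /qf -mulmxA Qz.
have e5 : (y^T *m Q *m z) 0 0 = (y^T *m x) 0 0 by rewrite -mulmxA Qz.
have e6 : (z^T *m Q *m y) 0 0 = (y^T *m x) 0 0 by rewrite bf_sym.
have H := Qp (y - z).
have : qf Q (y - z) = qf Q y - (y^T *m Q *m z) 0 0 - (z^T *m Q *m y) 0 0 + qf Q z.
  have T : (y - z)^T = y^T - z^T by apply: linearB.
  rewrite /qf T mulmxBr !mulmxBl !entryB; lra.
move=> E; move: H; rewrite E e5 e6 e4.
have := QP y; rewrite e3 e1 e2; lra.
Qed.


Lemma trq D M : D^T = D -> \tr (D *m M *m D) = \sum_k qf M (col k D).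
Proof.
move=> Ds; rewrite /mxtrace; apply: eq_bigr => k _.
rewrite /qf tr_col Ds -row_mul colE mulmxA -row_mul -colE.
by rewrite !mxE.
Qed.

Lemma CS (a b : 'I_d -> R) :
  (\sum_j a j * b j) ^+ 2 <= (\sum_j a j ^+ 2) * (\sum_j b j ^+ 2).
Proof.
set A := \sum_j a j ^+ 2; set B := \sum_j b j ^+ 2; set P := \sum_j a j * b j.
have A0 : 0 <= A by apply: sumr_ge0 => j _; apply: sqr_ge0.
have E : \sum_j (P * a j - A * b j) ^+ 2 = P ^+ 2 * A - 2%:R * P * A * P + A ^+ 2 * B.
  rewrite (eq_bigr (fun j => P ^+ 2 * a j ^+ 2 - 2%:R * P * A * (a j * b j) + A ^+ 2 * b j ^+ 2)); last by move=> j _; ring.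
  by rewrite big_split sumrB /= -!mulr_sumr.
have H : 0 <= \sum_j (P * a j - A * b j) ^+ 2 by apply: sumr_ge0 => j _; apply: sqr_ge0.
rewrite E in H.
have [A00|Apos] := eqVneq A 0.
  have a0 : forall j, a j = 0.
    move=> j; have := @psumr_eq0P _ _ xpredT (fun i => a i ^+ 2) (fun i _ => sqr_ge0 (a i)) A00 j isT.
    by move=> /eqP; rewrite sqrf_eq0 => /eqP.
  rewrite /P big1 ?expr0n //= ?A00 ?mul0r // => j _; rewrite a0 mul0r //.
have Ap : 0 < A by rewrite lt_def Apos A0.
have : 0 <= A * (A * B - P ^+ 2) by rewrite mulrBr; move: H; rewrite !expr2; lra.
by rewrite pmulr_rge0 // subr_ge0.
Qed.

Lemma nrm_mul M x : nrm (M *m x) <= (\sum_k nrm (col k M)) * nrm x.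
Proof.
rewrite nrmE (eq_bigr (fun i => (\sum_j M i j * x j 0) ^+ 2)); last by move=> i _; rewrite mxE.
rewrite [X in _ <= X * _](eq_bigr (fun k => \sum_i M i k ^+ 2)); last by move=> k _; rewrite nrmE; apply: eq_bigr => i _; rewrite mxE.
rewrite exchange_big /= mulr_suml; apply: ler_sum => i _.
by rewrite nrmE; apply: CS.
Qed.

Lemma inner_qf M x : \tr (x *m x^T *m M) = qf M x.
Proof. by rewrite -mulmxA mxtrace_mulC /qf /mxtrace big_ord1. Qed.


Lemma qfZ a M x : qf (a *: M) x = a * qf M x.
Proof. by have := qf_lin a 0 M x; rewrite (_ : 0%:M = 0) ?subr0 ?mul0r ?subr0 //; apply/matrixP => i j; rewrite !mxE mul0rn. Qed.

Lemma qf_sub b M x : qf (M - b%:M) x = qf M x - b * nrm x.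
Proof. by have := qf_lin 1 b M x; rewrite scale1r mul1r. Qed.

Lemma qf0 M : qf M 0 = 0.
Proof. by rewrite /qf mulmx0 mxE. Qed.

Lemma psd_of_pd M : (forall x, x != 0 -> 0 < qf M x) -> forall x, 0 <= qf M x.
Proof.
move=> H x; have [->|xn0] := eqVneq x 0; first by rewrite qf0.
exact/ltW/H.
Qed.

Lemma qf1 x : qf 1%:M x = nrm x.
Proof. by rewrite /qf mulmx1. Qed.

Lemma nrmZ a x : nrm (a *: x) = a ^+ 2 * nrm x.
Proof.
have T : (a *: x)^T = a *: x^T by apply: linearZ.
by rewrite /nrm T -scalemxAl -scalemxAr !entryZ mulrA expr2.
Qed.

End QF.
Unset Implicit Arguments.


Theorem lemma4p13 (R : rcfType) (d n : nat) (v : 'I_n -> 'cV[R]_d)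
  (Z : 'M[R]_d) (l lam : R) (S : 'M[R]_d) :
  symmx Z ->
  psdmx (Z - (4%:R)^-1%:M) ->
  let alpha := 8%:R * Num.sqrt (d%:R) in
  let A := invmx (alpha *: Z - l%:M) *m invmx (alpha *: Z - l%:M) in
  pdmx (alpha *: Z - l%:M) ->
  \tr A = 1 ->
  is_lambda_min Z lam ->
  is_psd_sqrt A S ->
  forall i : 'I_n,
    mxinner (v i *m (v i)^T) (invmx Z)
      <= alpha * mxinner (v i *m (v i)^T) S
    /\ alpha * mxinner (v i *m (v i)^T) S
      <= alpha * lam * mxinner (v i *m (v i)^T) (invmx Z).
Proof.
move=> Zs [_ Zq] alpha A [Bs Bp] Htr [lamev lammin] [[Ss Sp] SS] i.
subst A.
set B := alpha *: Z - l%:M in Bs Bp Htr SS *.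
set C := invmx B in Htr SS *.
have qZ : forall x, (4%:R)^-1 * nrm x <= qf Z x.
  move=> x; have : 0 <= qf (Z - (4%:R)^-1%:M) x by exact: Zq.
  rewrite qf_sub; lra.
have Bu : B \in unitmx by apply: unit_pd.
have Cs : C^T = C by rewrite /C trmx_inv Bs.
have BC : B *m C = 1%:M by rewrite /C mulmxV.
have CB : C *m B = 1%:M by rewrite /C mulVmx.
have qfC : forall x, qf C x = qf B (C *m x).
  move=> x; rewrite /qf trmx_mul Cs !mulmxA -(mulmxA _ C B) CB mulmx1 //.
have Cpd : forall x, x != 0 -> 0 < qf C x.
  move=> x xn0; rewrite qfC; apply: Bp; apply: contra xn0 => /eqP Cx0.
  by rewrite -(mul1mx x) -BC -mulmxA Cx0 mulmx0.
have Cpsd := psd_of_pd _ Cpd.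
have Bpsd := psd_of_pd _ Bp.
have SC : S = C.
  set D := S - C.
  have Ds : D^T = D by rewrite /D linearB /= Ss Cs.
  have E : S *m D + D *m C = 0.
    by rewrite /D mulmxBr mulmxBl SS addrA subrK subrr.
  have T : \tr (D *m (S *m D)) + \tr (D *m (D *m C)) = 0.
    by rewrite -mxtraceD -mulmxDr E mulmx0 mxtrace0.
  rewrite mulmxA [\tr (D *m (D *m C))]mxtrace_mulC !trq // in T.
  have s1 : 0 <= \sum_k qf S (col k D) by apply: sumr_ge0 => k _; apply: Sp.
  have s2 : 0 <= \sum_k qf C (col k D) by apply: sumr_ge0 => k _; apply: Cpsd.
  have s0 : \sum_k qf C (col k D) = 0 by lra.
  have colz : forall k, col k D = 0.
    move=> k; have := @psumr_eq0P _ _ xpredT (fun k => qf C (col k D)) (fun k _ => Cpsd _) s0 k isT.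
    move=> H; apply/eqP/negPn/negP => nz; have := Cpd _ nz; by rewrite H ltxx.
  have D0 : D = 0.
    by apply/matrixP => a b; have := colz b; move/matrixP/(_ a 0); rewrite !mxE.
  by apply/eqP; rewrite -subr_eq0 -/D D0.
rewrite /mxinner !inner_qf SC.
have [u uZ un0] := eigenvalueP lamev.
set xu := u^T.
have Zxu : Z *m xu = lam *: xu.
  by rewrite /xu -{1}Zs -trmx_mul uZ linearZ.
have xun0 : xu != 0.
  by apply: contra un0 => /eqP /(congr1 trmx); rewrite trmxK trmx0 => ->.
have xup : 0 < nrm xu.
  rewrite lt_def nrm_ge0 andbT; apply: contra xun0 => /eqP H; apply/eqP; exact: nrm_eq0.
have qZxu : qf Z xu = lam * nrm xu by rewrite /qf -mulmxA Zxu -scalemxAr entryZ.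
have lam4 : (4%:R)^-1 <= lam.
  by have := qZ xu; rewrite qZxu ler_pM2r.
have lamp : 0 < lam by apply: lt_le_trans lam4; rewrite invr_gt0 ltr0n.
set mu := alpha * lam - l.
have Bxu : B *m xu = mu *: xu.
  by rewrite /B mulmxBl -scalemxAl Zxu mul_scalar_mx scalerA scalerBl.
have mup : 0 < mu.
  have := Bp xu xun0; rewrite -/(qf B xu) /qf -mulmxA Bxu -scalemxAr entryZ.
  by rewrite pmulr_lgt0.
have Cxu : C *m xu = mu^-1 *: xu.
  have H : mu *: (C *m xu) = xu by rewrite scalemxAr -Bxu mulmxA CB mul1mx.
  by rewrite -{2}H scalerA mulVf ?scale1r // gt_eqF.
have trA : \tr (C *m C) = \sum_k nrm (col k C).
  by rewrite -{1}(mulmx1 C) trq //; apply: eq_bigr => k _; rewrite qf1.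
have mu1 : 1 <= mu.
  have := nrm_mul C xu; rewrite -trA Htr mul1r Cxu nrmZ.
  rewrite ger_pMl // => h.
  have t0 : 0 < mu^-1 by rewrite invr_gt0.
  have e : mu * mu^-1 = 1 by rewrite mulfV // gt_eqF.
  nra.
have alpha0 : 0 <= alpha by rewrite /alpha mulr_ge0 ?sqrtr_ge0 // ler0n.
have l0 : 0 <= l.
  rewrite leNgt; apply/negP => ln.
  set c := alpha * (4%:R)^-1 - l.
  have cp : 0 < c by rewrite /c; apply: ltr_pwDr; rewrite ?oppr_gt0 // mulr_ge0 // invr_ge0 ler0n.
  have bound : forall k, c ^+ 2 * nrm (col k C) <= 1.
    move=> k; set y := col k C.
    have By : B *m y = col k 1%:M by rewrite /y !colE mulmxA BC.
    have qBy : qf B y = y k 0.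
      by rewrite /qf -mulmxA By colE mul1mx -colE !mxE.
    have h1 : c * nrm y <= y k 0.
      rewrite -qBy /B qf_lin /c; have := qZ y; have := nrm_ge0 y.
      move=> h2 h3; have h4 : 0 <= alpha * (qf Z y - (4%:R)^-1 * nrm y).
        by apply: mulr_ge0 => //; rewrite subr_ge0.
      lra.
    have h2 := coord_le y k.
    have n0 := nrm_ge0 y.
    have [->|np] := eqVneq (nrm y) 0; first by rewrite mulr0.
    have npos : 0 < nrm y by rewrite lt_def np n0.
    have h3 : (c * nrm y) ^+ 2 <= nrm y.
      apply: le_trans h2.
      have cn0 : 0 <= c * nrm y by apply: mulr_ge0 => //; exact: ltW.
      have h5 : 0 <= y k 0 - c * nrm y by rewrite subr_ge0.
      have h6 := mulr_ge0 h5 (addr_ge0 h5 (addr_ge0 cn0 cn0)).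
      rewrite !expr2; nra.
    rewrite -(ler_pM2r npos) mul1r; move: h3; rewrite exprMn => h.
    by have -> : c ^+ 2 * nrm y * nrm y = c ^+ 2 * nrm y ^+ 2 by rewrite expr2 mulrA.
  have : c ^+ 2 * \tr (C *m C) <= d%:R.
    rewrite trA mulr_sumr.
    have -> : (d%:R : R) = \sum_(k < d) 1 by rewrite sumr_const card_ord.
    exact: ler_sum.
  rewrite Htr mulr1.
  have ca : alpha * (4%:R)^-1 < c by rewrite /c; lra.
  have e : alpha * (4%:R)^-1 = 2%:R * Num.sqrt d%:R.
    have e8 : (8%:R : R) = 2%:R * 4%:R by rewrite -natrM.
    by rewrite /alpha mulrAC; congr (_ * _); rewrite e8 mulfK // pnatr_eq0.
  have sq : Num.sqrt (d%:R : R) ^+ 2 = d%:R by rewrite sqr_sqrtr // ler0n.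
  have s0 : 0 <= Num.sqrt (d%:R : R) by apply: sqrtr_ge0.
  rewrite e in ca.
  have d0 : 0 <= (d%:R : R) by apply: ler0n.
  move=> hc; nra.
have lamq : forall x, lam * nrm x <= qf Z x.
  by move=> x; exact: (@psd_from_lmin _ _ Z lam Zs lammin x).
have alphap : 0 < alpha.
  rewrite lt_def alpha0 andbT; apply/negP => /eqP a0.
  by move: mu1; rewrite /mu a0 mul0r; lra.
have Zpd : forall x, x != 0 -> 0 < qf Z x.
  move=> x xn0; apply: lt_le_trans (qZ x); apply: mulr_gt0; first by rewrite invr_gt0 ltr0n.
  by rewrite lt_def nrm_ge0 andbT; apply: contra xn0 => /eqP H; apply/eqP; exact: nrm_eq0.
have Zu : Z \in unitmx by apply: unit_pd.
have Zpsd := psd_of_pd _ Zpd.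
split.
  have aZu : alpha *: Z \in unitmx by rewrite unitmxZ ?unitfE ?gt_eqF.
  have sZ : (alpha *: Z)^T = alpha *: Z by rewrite linearZ /= Zs.
  have H := @inv_anti _ _ (alpha *: Z) B (v i) sZ Bs aZu Bu Bpsd.
  have : qf (invmx (alpha *: Z)) (v i) <= qf C (v i).
    apply: H => y; rewrite /B qf_lin qfZ; have := nrm_ge0 y; nra.
  rewrite invmxZ // qfZ => h.
  have ai : 0 < alpha^-1 by rewrite invr_gt0.
  by rewrite -(ler_pM2l ai) mulrA mulVf ?mul1r // gt_eqF.
have lZu : lam^-1 *: Z \in unitmx by rewrite unitmxZ ?unitfE ?invr_eq0 ?gt_eqF.
have sZ : (lam^-1 *: Z)^T = lam^-1 *: Z by rewrite linearZ /= Zs.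
have H := @inv_anti _ _ B (lam^-1 *: Z) (v i) Bs sZ Bu lZu.
have : qf C (v i) <= qf (invmx (lam^-1 *: Z)) (v i).
  apply: H => y; rewrite ?qfZ.
    by apply: mulr_ge0; [rewrite invr_ge0; exact: ltW | exact: Zpsd].
  rewrite /B qf_lin.
  have hq := lamq y; have hn := nrm_ge0 y.
  have h1 : 0 <= (alpha * lam - 1 - l) * qf Z y.
    apply: mulr_ge0; first by move: mu1; rewrite /mu; lra.
    exact: Zpsd.
  have h2 : 0 <= l * (qf Z y - lam * nrm y) by apply: mulr_ge0 => //; rewrite subr_ge0.
  rewrite -(ler_pM2l lamp) mulrA mulfV ?gt_eqF // mul1r.
  nra.
rewrite invmxZ // invrK qfZ => h.
by rewrite -mulrA; apply: ler_wpM2l.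
Qed.
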